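(* In the setting and for the algorithm OOPE described in the context, let $l_M$ denote the number of phases up to and including the penultimate phase (the last phase being the one in which the online samples are exhausted). Define $H^{-1}:\mathbb{R}_{\ge0}\to\mathbb{N}\cup\{0\}$ by $H^{-1}(x)=\max\{n\in\mathbb{N}\cup\{0\}:\sum_{l=1}^n4^l\log(4l^2|\mathcal{A}|T)\le x\}$. Then $l_M\le H^{-1}\big(\frac{T}{3d_{\mathrm{eff}}}\big)$.
   Context: Setting: $\mathcal{A}\subset\mathbb{R}^d$ finite, known, $\mathrm{span}(\mathcal{A})=\mathbb{R}^d$; unknown $\theta^*\in\mathbb{R}^d$; pulling $a$ yields $\langle\theta^*,a\rangle+\eta$, $\eta$ zero-mean 1-sub-Gaussian independent; $T_{\mathrm{off}}$ offline samples collected non-adaptively by fixed $\pi_{\mathrm{off}}\in\Delta(\mathcal{A})$ ($\pi_{\mathrm{off}}(a)T_{\mathrm{off}}$ from arm $a$, same reward law); then $T$ online rounds. Notation: $V_\pi=\sum_a\pi(a)aa^\top$, $g_{\mathcal{B}}(\pi)=\max_{a\in\mathcal{B}}a^\top V_\pi^{-1}a$, $\lambda_k$ the $k$-th smallest eigenvalue, $d_{\mathrm{eff}}=\min\big(\sum_{k=1}^d(1+\frac{T_{\mathrm{off}}}{T}\frac{\lambda_k(V_{\pi_{\mathrm{off}}})}{\max_a\|a\|^2})^{-1},\frac{T}{T_{\mathrm{off}}}g_{\mathcal{A}}(\pi_{\mathrm{off}})\big)$. Algorithm OOPE: $\alpha=T_{\mathrm{off}}/(T_{\mathrm{off}}+T)$,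 $\mathcal{A}_1=\mathcal{A}$. Phase $l$: if $|\mathcal{A}_l|=1$ pull its arm for all remaining rounds. Else $\epsilon_l=2^{-l}$, $\pi^*_{l,\mathrm{on}}\in\arg\max_{\pi\in\Delta(\mathcal{A}_l)}\log\det V_{(1-\alpha)\pi+\alpha\pi_{\mathrm{off}}}$, $\tilde\pi_l=(1-\alpha)\pi^*_{l,\mathrm{on}}+\alpha\pi_{\mathrm{off}}$; for each arm $a$ in turn take $n^l_{\mathrm{on}}(a)=\lceil3d_{\mathrm{eff}}\pi^*_{l,\mathrm{on}}(a)\log(4l^2|\mathcal{A}|T)/\epsilon_l^2\rceil$ new online pulls and request $n^l_{\mathrm{off}}(a)=\lceil2\alpha\pi_{\mathrm{off}}(a)g_{\mathcal{A}_l}(\tilde\pi_l)\log(4l^2|\mathcal{A}|T)/\epsilon_l^2\rceil$ offline samples of $a$ not used before (all remaining if fewer). If the online budget would be exceeded, the remaining rounds are used and the algorithm stops without elimination. Otherwise compute the least-squares estimate $\hat\theta_l$ from phase-$l$ samples only, and set $\mathcal{A}_{l+1}=\mathcal{A}_l\setminus\{a:\max_{a'\in\mathcal{A}_l}\langle a'-a,\hat\theta_l\rangle\ge2\epsilon_l\}$. *)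

(* Defs.v *)
From HB Require Import structures.
From mathcomp Require Import all_boot all_order all_algebra.
From mathcomp Require Import reals exp.
Set Implicit Arguments.
Unset Strict Implicit.
Unset Printing Implicit Defensive.
Import Order.TTheory GRing.Theory Num.Theory.
Local Open Scope ring_scope.

Section OOPE.
Variable R : realType.
Variables d K : nat.
(* the arm set A = {arm a | a : 'I_K} (arm injective), arms are column vectors *)
Variable arm : 'I_K -> 'cV[R]_d.
Variable theta : 'cV[R]_d.
Variables T Toff : nat.                (* online horizon, offline sample size *)
Variable pioff : 'I_K -> R.
Variable cnt : 'I_K -> nat.            (* number of offline samples of arm a = pi_off(a) T_off *)
Variable eta_on : nat -> R.            (* noise realisation of online round s (s = 0,1,...) *)
Variable eta_off : 'I_K -> nat -> R.   (* noise realisation of j-th offline sample of arm a *)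
Variable lam : 'I_d -> R.              (* lam k = (k+1)-th smallest eigenvalue of V_{pi_off} *)
Variable pistar : nat -> {set 'I_K} -> 'I_K -> R. (* design pi*_{l,on} chosen for A_l *)

Definition inner (x y : 'cV[R]_d) : R := (x^T *m y) 0 0.
Definition qf (M : 'M[R]_d) (x : 'cV[R]_d) : R := (x^T *m M *m x) 0 0.

Definition Vmat (pi : 'I_K -> R) : 'M[R]_d := \sum_a pi a *: (arm a *m (arm a)^T).

Definition simplex (B : {set 'I_K}) (pi : 'I_K -> R) : Prop :=
  (forall a, 0 <= pi a) /\ (forall a, a \notin B -> pi a = 0) /\ \sum_a pi a = 1.

Definition gB (B : {set 'I_K}) (pi : 'I_K -> R) : R :=
  \big[Num.max/0]_(a in B) qf (invmx (Vmat pi)) (arm a).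

Definition maxnorm2 : R := \big[Num.max/0]_a inner (arm a) (arm a).

Definition deff_first : R :=
  \sum_(k < d) (1 + (Toff%:R / T%:R) * (lam k / maxnorm2))^-1.

(* d_eff; the second term of the min is +oo when T_off = 0 or V_{pi_off} singular *)
Definition deff : R :=
  if (0 < Toff)%N && (Vmat pioff \in unitmx)
  then Num.min deff_first (T%:R / Toff%:R * gB [set: 'I_K] pioff)
  else deff_first.

Definition alpha : R := Toff%:R / (Toff%:R + T%:R).
Definition mix (pi : 'I_K -> R) (a : 'I_K) : R := (1 - alpha) * pi a + alpha * pioff a.

Definition eps (l : nat) : R := (2 ^+ l)^-1.
Definition lg (l : nat) : R := ln (4 * (l ^ 2)%:R * K%:R * T%:R).
Definition cnat (x : R) : nat := `|Num.ceil x|%N.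

Definition non (l : nat) (S : {set 'I_K}) (a : 'I_K) : nat :=
  cnat (3 * deff * pistar l S a * lg l / eps l ^+ 2).
Definition noff (l : nat) (S : {set 'I_K}) (a : 'I_K) : nat :=
  cnat (2 * alpha * pioff a * gB S (mix (pistar l S)) * lg l / eps l ^+ 2).

Definition Non (l : nat) (S : {set 'I_K}) : nat := \sum_a non l S a.

(* first online round used for arm a in phase l (arms processed in order),
   t = number of online rounds used before phase l *)
Definition start (l : nat) (S : {set 'I_K}) (t : nat) (a : 'I_K) : nat :=
  t + \sum_(b < K | (b < a)%N) non l S b.

(* offline samples of arm a actually used in phase l, u a = offline samples of a used before *)
Definition moff (l : nat) (S : {set 'I_K}) (u : 'I_K -> nat) (a : 'I_K) : nat :=
  minn (noff l S a) (cnt a - u a).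

(* least-squares estimate from phase-l samples only *)
Definition gram (l : nat) (S : {set 'I_K}) (u : 'I_K -> nat) : 'M[R]_d :=
  \sum_a (non l S a + moff l S u a)%:R *: (arm a *m (arm a)^T).

Definition yvec (l : nat) (S : {set 'I_K}) (t : nat) (u : 'I_K -> nat) : 'cV[R]_d :=
  \sum_a ((\sum_(s < non l S a) (inner (arm a) theta + eta_on (start l S t a + s)))
          + (\sum_(j < moff l S u a) (inner (arm a) theta + eta_off a (u a + j)))) *: arm a.

Definition thetahat (l : nat) (S : {set 'I_K}) (t : nat) (u : 'I_K -> nat) : 'cV[R]_d := invmx (gram l S u) *m yvec l S t u.

Definition elim (l : nat) (S : {set 'I_K}) (t : nat) (u : 'I_K -> nat) : {set 'I_K} :=
  [set a in S | ~~ [exists a' in S, 2 * eps l <= inner (arm a' - arm a) (thetahat l S t u)]].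

(* Number of phases that complete (i.e. end with an elimination step), executed
   with at most [fuel] phases, starting at phase l with active set S, t online
   rounds used and u a offline samples of arm a used.  A phase with |A_l| <= 1,
   or whose online pulls would exceed the budget T, is the last phase. *)
Fixpoint completed (fuel l : nat) (S : {set 'I_K}) (t : nat) (u : 'I_K -> nat) : nat :=
  match fuel with
  | 0 => 0
  | fuel'.+1 =>
      if (#|S| <= 1)%N then 0
      else if (T < t + Non l S)%N then 0
      else (completed fuel' l.+1 (elim l S t u) (t + Non l S)
                      (fun a => u a + moff l S u a)).+1
  end.

(* l_M when the algorithm is run with fuel for at most [fuel] phases *)
Definition lM (fuel : nat) : nat := completed fuel 1 [set: 'I_K] 0 (fun _ => 0%N).

Definition Hsum (n : nat) : R := \sum_(1 <= l < n.+1) 4 ^+ l * lg l.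
Definition is_Hinv (x : R) (h : nat) : Prop :=
  Hsum h <= x /\ forall n : nat, Hsum n <= x -> (n <= h)%N.

End OOPE.

(* Main.v *)
Require Import Defs.
From HB Require Import structures.
From mathcomp Require Import all_boot all_order all_algebra.
From mathcomp Require Import reals exp.
From mathcomp Require Import ring lra.
Import Order.TTheory GRing.Theory Num.Theory.
Local Open Scope ring_scope.

Section P1.
Variable R : realType.
Variables d K : nat.
Variable arm : 'I_K -> 'cV[R]_d.
Variable theta : 'cV[R]_d.
Variables T Toff : nat.
Variable pioff : 'I_K -> R.
Variable cnt : 'I_K -> nat.
Variable eta_on : nat -> R.
Variable eta_off : 'I_K -> nat -> R.
Variable lam : 'I_d -> R.
Variable pistar : nat -> {set 'I_K} -> 'I_K -> R.
Hypothesis hps : forall (l : nat) (S : {set 'I_K}), (1 < #|S|)%N -> simplex S (pistar l S).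

Let D := deff arm T Toff pioff lam.

Lemma cnat_ge (x : R) : x <= (cnat x)%:R.
Proof.
rewrite /cnat natr_absz.
apply: (le_trans (real_ceil_ge (num_real x))).
by rewrite ler_int ler_norm.
Qed.

Lemma Non_ge l (S : {set 'I_K}) : (1 < #|S|)%N ->
  3 * D * 4 ^+ l * lg R K T l <= (Non arm T Toff pioff lam pistar l S)%:R.
Proof.
move=> hS; have [h0 [h1 h2]] := hps l S hS.
rewrite /Non natr_sum.
apply: le_trans (ler_sum _ (fun a _ => cnat_ge _)).
have E : forall a, 3 * D * pistar l S a * lg R K T l / eps R l ^+ 2 =
     (3 * D * 4 ^+ l * lg R K T l) * pistar l S a.
  have e : eps R l ^+ 2 = (4 ^+ l)^-1.
    rewrite /eps exprVn -exprM mulnC exprM.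
    by have -> : (2:R) ^+ 2 = 4 by rewrite expr2; lra.
  move=> a; rewrite e invrK /D; ring.
rewrite (eq_bigr _ (fun a _ => E a)) -mulr_sumr h2 mulr1 /D.
by [].
Qed.

Lemma main_ind fuel l (S : {set 'I_K}) t u : (t <= T)%N ->
  t%:R + 3 * D * \sum_(l <= j < l + completed arm theta T Toff pioff cnt eta_on eta_off lam pistar fuel l S t u)
     (4 ^+ j * lg R K T j) <= T%:R.
Proof.
elim: fuel l S t u => [|f IH] l S t u htT /=.
  by rewrite addn0 big_geq // mulr0 addr0 ler_nat.
case: ifP => hS; first by rewrite addn0 big_geq // mulr0 addr0 ler_nat.
case: ifP => hT; first by rewrite addn0 big_geq // mulr0 addr0 ler_nat.
have hS' : (1 < #|S|)%N by rewrite ltnNge hS.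
have hT' : (t + Non arm T Toff pioff lam pistar l S <= T)%N by rewrite leqNgt hT.
match goal with |- context [completed _ _ _ _ _ _ _ _ _ _ f l.+1 ?X ?Y ?Z] => have := IH l.+1 X Y Z hT' end.
set n := completed _ _ _ _ _ _ _ _ _ _ f _ _ _ _.
rewrite addnS big_ltn ?ltnS ?leq_addr // -addSn natrD.
have := Non_ge l S hS'.
set N := (Non _ _ _ _ _ _ _ _)%:R.
set s := \sum_(_ <= _ < _) _.
move=> h1 h2.
rewrite mulrDr; lra.
Qed.

End P1.
Section P2.
Variable R : realType.
Variables d K : nat.
Variable arm : 'I_K -> 'cV[R]_d.

Lemma tr_inner (a x : 'cV[R]_d) : (x^T *m a) 0 0 = (a^T *m x) 0 0.
Proof. by rewrite -[x^T *m a]trmxK trmx_mul trmxK mxE. Qed.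

Lemma qf_Vmat (pi : 'I_K -> R) (x : 'cV[R]_d) :
  qf (Vmat arm pi) x = \sum_a pi a * (inner (arm a) x) ^+ 2.
Proof.
rewrite /qf /Vmat mulmx_sumr mulmx_suml summxE; apply: eq_bigr => a _.
rewrite -scalemxAr -scalemxAl mxE; congr (_ * _).
rewrite mulmxA -(mulmxA (x^T *m arm a)) mxE big_ord_recl big_ord0 addr0 tr_inner /inner expr2.
by [].
Qed.

Lemma Vmat_psd (pi : 'I_K -> R) x : (forall a, 0 <= pi a) -> 0 <= qf (Vmat arm pi) x.
Proof.
move=> h; rewrite qf_Vmat; apply: sumr_ge0 => a _.
by apply: mulr_ge0 => //; apply: sqr_ge0.
Qed.

Lemma Vmat_sym (pi : 'I_K -> R) : (Vmat arm pi)^T = Vmat arm pi.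
Proof.
apply/matrixP => i j; rewrite /Vmat !mxE !summxE; apply: eq_bigr => a _.
rewrite !mxE !big_ord_recl !big_ord0 !addr0 !mxE; congr (_ * _); exact: mulrC.
Qed.

Lemma eig_ge0 (pi : 'I_K -> R) (x : R) : (forall a, 0 <= pi a) ->
  root (char_poly (Vmat arm pi)) x -> 0 <= x.
Proof.
move=> hpi; rewrite -eigenvalue_root_char => /eigenvalueP [v hv vn0].
have h1 := @Vmat_psd pi v^T hpi.
rewrite /qf trmxK hv -scalemxAl mxE in h1.
have hs : 0 < (v *m v^T) 0 0.
  rewrite mxE.
  have hge : forall j : 'I_d, true -> 0 <= v 0 j * v^T j 0.
    by move=> j _; rewrite mxE -expr2 sqr_ge0.
  rewrite lt_neqAle sumr_ge0 // andbT eq_sym; apply/negP => /eqP h0.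
  move/negP: vn0; apply; apply/eqP/matrixP => i j.
  have := psumr_eq0P hge h0 (i:=j) isT; rewrite mxE -expr2 => /eqP.
  by rewrite sqrf_eq0 (ord1 i) mxE => /eqP.
nra.
Qed.

Lemma qf_inv_pos (pi : 'I_K -> R) (x : 'cV[R]_d) : (forall a, 0 <= pi a) ->
  Vmat arm pi \in unitmx -> x != 0 -> 0 < qf (invmx (Vmat arm pi)) x.
Proof.
move=> hpi hu xn0.
set V := Vmat arm pi.
set y := invmx V *m x.
have hx : x = V *m y by rewrite /y mulKVmx.
have -> : qf (invmx V) x = qf V y.
  rewrite /qf -mulmxA -/y {1}hx trmx_mul Vmat_sym -/V.
  by rewrite mulmxA.
rewrite lt_neqAle Vmat_psd // andbT eq_sym; apply/negP => /eqP h0.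
move/negP: xn0; apply; apply/eqP.
rewrite hx /V /Vmat mulmx_suml big1 // => a _.
move: h0; rewrite qf_Vmat => h0.
have hge : forall a : 'I_K, true -> 0 <= pi a * inner (arm a) y ^+ 2.
  by move=> b _; apply: mulr_ge0 => //; apply: sqr_ge0.
have /eqP := psumr_eq0P hge h0 (i:=a) isT.
rewrite -scalemxAl -mulmxA [(arm a)^T *m y]mx11_scalar mul_mx_scalar scalerA.
rewrite mulf_eq0 sqrf_eq0 /inner => /orP [] /eqP ->.
  by rewrite mul0r scale0r.
by rewrite mulr0 scale0r.
Qed.

End P2.

Lemma deff_pos (R : realType) (d K : nat) (arm : 'I_K -> 'cV[R]_d)
  (T Toff : nat) (pioff : 'I_K -> R) (lam : 'I_d -> R) :
  (0 < d)%N -> (0 < T)%N -> simplex [set: 'I_K] pioff ->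
  char_poly (Vmat arm pioff) = \prod_(i < d) ('X - (lam i)%:P) ->
  0 < deff arm T Toff pioff lam.
Proof.
move=> hd hT [hp0 [_ hp1]] hc.
have hlam : forall k, 0 <= lam k.
  move=> k; apply: (@eig_ge0 R d K arm pioff (lam k) hp0).
  by rewrite hc /root horner_prod (bigD1 k) //= hornerXsubC subrr mul0r.
have hm : 0 <= maxnorm2 arm.
  rewrite /maxnorm2; apply: (big_rec (fun x => 0 <= x)) => // i y _ hy.
  by rewrite le_max hy orbT.
have hf : 0 < deff_first arm T Toff lam.
  rewrite /deff_first (bigD1 (Ordinal hd)) //=.
  have ht : forall k : 'I_d, 0 < (1 + Toff%:R / T%:R * (lam k / maxnorm2 arm))^-1.
    move=> k; rewrite invr_gt0.
    have : 0 <= Toff%:R / T%:R * (lam k / maxnorm2 arm).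
      by apply: mulr_ge0; apply: divr_ge0 => //; apply: ler0n.
    lra.
  have := ht (Ordinal hd).
  have : 0 <= \sum_(i < d | i != Ordinal hd) (1 + Toff%:R / T%:R * (lam i / maxnorm2 arm))^-1.
    by apply: sumr_ge0 => k _; apply: ltW.
  lra.
rewrite /deff; case: ifP => // /andP [hTo hu].
rewrite lt_min hf /=; apply: mulr_gt0; first by apply: divr_gt0; rewrite ltr0n.
case: (pickP (fun a => arm a != 0)) => [a ha | hnone].
  rewrite /gB (bigD1 a) ?in_setT //=; have H := (@qf_inv_pos R d K arm pioff (arm a) hp0 hu ha).
  set m := \big[_/_]_(_ in _ | _) _.
  by rewrite lt_max H.
exfalso.
have hV : Vmat arm pioff = 0.
  by rewrite /Vmat big1 // => b _; rewrite (eqP (negbFE (hnone b))) mul0mx scaler0.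
have := mulmxV hu; rewrite hV mul0mx => /matrixP /(_ (Ordinal hd) (Ordinal hd)).
by rewrite !mxE eqxx /= => /eqP; rewrite eq_sym oner_eq0.
Qed.
Theorem lemma4p2 (R : realType) (d K : nat) (arm : 'I_K -> 'cV[R]_d)
  (theta : 'cV[R]_d) (T Toff : nat) (pioff : 'I_K -> R) (cnt : 'I_K -> nat)
  (eta_on : nat -> R) (eta_off : 'I_K -> nat -> R) (lam : 'I_d -> R)
  (pistar : nat -> {set 'I_K} -> 'I_K -> R) :
  (0 < d)%N -> (0 < T)%N ->
  injective arm ->
  row_full (\matrix_(i < K, j < d) arm i j 0) ->
  simplex [set: 'I_K] pioff ->
  (forall a, (cnt a)%:R = pioff a * Toff%:R) ->
  (forall i j : 'I_d, (i <= j)%N -> lam i <= lam j) ->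
  char_poly (Vmat arm pioff) = \prod_(i < d) ('X - (lam i)%:P) ->
  (forall (l : nat) (S : {set 'I_K}), (1 < #|S|)%N ->
     simplex S (pistar l S) /\
     (forall pi, simplex S pi ->
        \det (Vmat arm (mix T Toff pioff pi))
          <= \det (Vmat arm (mix T Toff pioff (pistar l S))))) ->
  forall (fuel h : nat),
  is_Hinv K T (T%:R / (3 * deff arm T Toff pioff lam)) h ->
  (lM arm theta T Toff pioff cnt eta_on eta_off lam pistar fuel <= h)%N.
Proof.
move=> hd hT _ _ hsp _ _ hc hps fuel h [_ hH].
have hD := @deff_pos R d K arm T Toff pioff lam hd hT hsp hc.
have hps' : forall l (S : {set 'I_K}), (1 < #|S|)%N -> simplex S (pistar l S) by move=> l S hS; exact: (proj1 (hps l S hS)).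

have := @main_ind R d K arm theta T Toff pioff cnt eta_on eta_off lam pistar hps' fuel 1 [set: 'I_K] 0 (fun _ => 0%N) (leq0n T).
rewrite /lM add1n => hmain; apply: hH.
rewrite ler_pdivlMr; last by apply: mulr_gt0 => //; lra.
rewrite /Hsum; move: hmain; set s := \sum_(_ <= _ < _) _; lra.
Qed.
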